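(* Let $A\in\mathbb R^{d\times d}$ be symmetric with $\mathrm{Tr}(A)=0$, and let $k\ge1$ be an integer. Then $$A^{\tilde\otimes k}(I^{\otimes k-1})=\sum_{s=1}^k d_{k,s}\,A^s\cdot A^{\tilde\otimes k-s}(I^{\otimes(k-s)}),\qquad d_{k,s}:=2^{s-1}\frac{(2k-2s-1)!!\,(k-1)!}{(2k-1)!!\,(k-s)!},$$ with the convention $(-1)!!=1$.
   Context: For a $k$-tensor $T\in(\mathbb R^d)^{\otimes k}$, $\mathrm{Sym}(T)_{i_1\dots i_k}=\frac1{k!}\sum_{\pi\in S_k}T_{i_{\pi(1)}\dots i_{\pi(k)}}$. The symmetric tensor product is $A\tilde\otimes B=\mathrm{Sym}(A\otimes B)$, and $A^{\tilde\otimes k}=\mathrm{Sym}(A^{\otimes k})$, viewing the matrix $A$ as a 2-tensor (so $A^{\tilde\otimes k}$ is a symmetric $2k$-tensor). For a symmetric $k$-tensor $T$ and an $a$-tensor $M$ with $a\le k$, the contraction $T(M)$ is the $(k-a)$-tensor $T(M)_{i_1\dots i_{k-a}}=\sum_{j_1,\dots,j_a}T_{j_1\dots j_a i_1\dots i_{k-a}}M_{j_1\dots j_a}$. Thus $A^{\tilde\otimes k}(I^{\otimes k-1})$ is a $d\times d$ matrix, $A^{\tilde\otimes k-s}(I^{\otimes(k-s)})$ is a scalar (equal to $1$ when $s=k$), and $A^s$ is the matrix power. *)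

(* Defs.v *)
From HB Require Import structures.
From mathcomp Require Import all_boot all_order all_algebra all_fingroup.
Set Implicit Arguments. Unset Strict Implicit. Unset Printing Implicit Defensive.
Import Order.TTheory GRing.Theory Num.Theory.
Local Open Scope ring_scope.

Definition tensor (R : Type) (d n : nat) := n.-tuple 'I_d -> R.

Definition Sym (R : fieldType) d n (T : tensor R d n) : tensor R d n :=
  fun t => (n`!%:R)^-1 * \sum_(p : 'S_n) T [tuple tnth t (p j) | j < n].

Fixpoint prod_pairs (R : pzRingType) d (A : 'M[R]_d) (s : seq 'I_d) : R :=
  match s with
  | x :: y :: r => A x y * prod_pairs A r
  | _ => 1
  end.

(* The tensor power A^{\otimes k} of the matrix A (viewed as a 2-tensor),
   written out entrywise; it is used at order n = 2k:
   (A^{\otimes k})_{i_1 .. i_{2k}} = \prod_m A_{i_{2m-1} i_{2m}}. *)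
Definition mx_tpow (R : pzRingType) d (A : 'M[R]_d) (n : nat) : tensor R d n :=
  fun t => prod_pairs A (val t).
Arguments mx_tpow {R d} A n.

Definition mx_stpow (R : fieldType) d (A : 'M[R]_d) (n : nat) : tensor R d n :=
  Sym (mx_tpow A n).
Arguments mx_stpow {R d} A n.

Definition contract (R : pzRingType) d a b (T : tensor R d (a + b))
    (M : tensor R d a) : tensor R d b :=
  fun j => \sum_(i : a.-tuple 'I_d) T (cat_tuple i j) * M i.
Arguments contract {R d a b} T M.

Definition mx_of2 (R : pzRingType) d (T : tensor R d 2) : 'M[R]_d :=
  \matrix_(i, j) T [tuple i; j].

Definition scal_of0 (R : pzRingType) d (T : tensor R d 0) : R := T [tuple].

Fixpoint dfact (n : nat) : nat :=
  match n with
  | n'.+2 => n'.+2 * dfact n'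
  | _ => 1
  end.

Definition dcoef (R : fieldType) (k s : nat) : R :=
  (2 ^ (s - 1) * dfact ((2 * (k - s)).-1) * (k - 1)`!)%:R /
  (dfact ((2 * k).-1) * (k - s)`!)%:R.

(* Main.v *)
Require Import Defs.
From HB Require Import structures.
From mathcomp Require Import all_boot all_order all_algebra all_fingroup.
From mathcomp Require Import ring lra zify.
From Stdlib Require Import Lia.
Set Implicit Arguments. Unset Strict Implicit. Unset Printing Implicit Defensive.
Import Order.TTheory GRing.Theory Num.Theory.
Local Open Scope ring_scope.

Section Helpers.
Variable R : realFieldType.
Variable d : nat.
Variable A : 'M[R]_d.+1.
Hypothesis hsym : A^T = A.

Lemma Asym i j : A i j = A j i.
Proof. by rewrite -{1}hsym mxE. Qed.

Definition PSn n (f : nat -> 'I_d.+1) : R :=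
  \sum_(p : 'S_n) prod_pairs A [seq f (p j : nat) | j <- enum 'I_n].

Lemma PSn_ext n f g : (forall i, (i < n)%N -> f i = g i) -> PSn n f = PSn n g.
Proof.
move=> H; apply: eq_bigr => p _; congr prod_pairs; apply: eq_map => j.
exact: H.
Qed.

Lemma sum_lift_perm n (G : 'S_n.+1 -> R) i0 j0 :
  \sum_(s : 'S_n.+1 | s i0 == j0) G s = \sum_(s : 'S_n) G (lift_perm i0 j0 s).
Proof.
rewrite (reindex (lift_perm i0 j0)); last first.
  pose ulsf i (s : 'S_n.+1) k := odflt k (unlift (s i) (s (lift i k))).
  have ulsfK i (s : 'S_n.+1) k: lift (s i) (ulsf i s k) = s (lift i k).
    rewrite /ulsf; have:= neq_lift i k.
    by rewrite -(can_eq (permK s)) => /unlift_some[] ? ? ->.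
  have inj_ulsf: injective (ulsf i0 _).
    move=> s; apply: can_inj (ulsf (s i0) s^-1%g) _ => k'.
    by rewrite {1}/ulsf ulsfK !permK liftK.
  exists (fun s => perm (inj_ulsf s)) => [s _ | s].
    by apply/permP=> k'; rewrite permE /ulsf lift_perm_lift lift_perm_id liftK.
  move/(s _ =P _) => si0; apply/permP=> k.
  case: (unliftP i0 k) => [k'|] ->; rewrite ?lift_perm_id //.
  by rewrite lift_perm_lift -si0 permE ulsfK.
by apply: eq_bigl => s; rewrite lift_perm_id eqxx.
Qed.

Lemma sum_partition0 n (G : 'S_n.+1 -> R) :
  \sum_(s : 'S_n.+1) G s = \sum_(b < n.+1) \sum_(s : 'S_n.+1 | s ord0 == b) G s.
Proof.
rewrite (exchange_big_dep xpredT) //=; apply: eq_bigr => s _.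
by rewrite (big_pred1 (s ord0)) // => b; rewrite eq_sym.
Qed.

Lemma sum_partition_inv n (G : 'S_n -> R) (a : 'I_n) :
  \sum_(s : 'S_n) G s = \sum_(j < n) \sum_(s : 'S_n | s j == a) G s.
Proof.
rewrite (exchange_big_dep xpredT) //=; apply: eq_bigr => s _.
rewrite (big_pred1 ((s^-1)%g a)) // => j.
apply/eqP/eqP => [<-|->]; by rewrite ?permK ?permKV.
Qed.


Lemma pp_iota (h : nat -> 'I_d.+1) a k :
  prod_pairs A [seq h i | i <- iota a k.*2] =
  \prod_(i < k) A (h (a + i.*2)%N) (h (a + i.*2).+1).
Proof.
elim: k a => [|k IH] a; first by rewrite big_ord0.
rewrite doubleS /= IH big_ord_recl /= addn0; congr (_ * _).
apply: eq_bigr => i _; rewrite /bump /= doubleS.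
by congr (A (h _) (h _)); lia.
Qed.

Lemma enum_iota m (g : 'I_m.+1 -> 'I_d.+1) :
  [seq g x | x <- enum 'I_m.+1] = [seq g (inord i) | i <- iota 0 m.+1].
Proof.
rewrite -val_enum_ord -map_comp; apply: eq_map => x /=; by rewrite inord_val.
Qed.

Lemma tau_exists m (j : 'I_m.+2) : ~~ odd m ->
  exists tau : 'S_m.+2, tau ord0 = j /\
   forall g : 'I_m.+2 -> 'I_d.+1,
     prod_pairs A [seq g (tau x) | x <- enum 'I_m.+2] =
     prod_pairs A [seq g x | x <- enum 'I_m.+2].
Proof.
move=> em.
set K := (m./2).+1.
have eK : m.+2 = K.*2.
  by rewrite /K doubleS -{1}(odd_double_half m) (negbTE em).
have jK : (j./2 < K)%N.
  have h1 := odd_double_half j; have h2 := odd_double_half m.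
  have h3 := ltn_ord j; rewrite (negbTE em) in h2; rewrite /K.
  move: h1 h2 h3; rewrite -!muln2; case: (odd j) => /=; lia.
pose sg : 'S_K := tperm ord0 (inord (j./2)).
pose tn (x : nat) : nat := ((sg (inord (x./2)) : nat).*2 + (odd x (+) odd j))%N.
have halflt x : (x < m.+2)%N -> (x./2 < K)%N.
  move=> hx; have h1 := odd_double_half x; have h2 := odd_double_half m.
  rewrite (negbTE em) in h2; rewrite /K.
  move: h1 h2 hx; rewrite -!muln2; case: (odd x) => /=; lia.
have tnlt x : (x < m.+2)%N -> (tn x < m.+2)%N.
  move=> _; rewrite /tn; have := eK; have := ltn_ord (sg (inord x./2)).
  have : (nat_of_bool (odd x (+) odd j) <= 1)%N by destruct (odd x (+) odd j).
  rewrite -!muln2; lia.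
have tninj x y : (x < m.+2)%N -> (y < m.+2)%N -> tn x = tn y -> x = y.
  move=> hx hy e.
  have eo : odd x = odd y.
    have := congr1 odd e; rewrite /tn !oddD !odd_double /=.
    by case: (odd x); case: (odd y); case: (odd j).
  have eh : sg (inord x./2) = sg (inord y./2).
    apply: val_inj; move: e; rewrite /tn eo -!muln2 /=. move=> e. lia.
  have := perm_inj eh => /(congr1 (@nat_of_ord _)); rewrite !inordK ?halflt // => eh2.
  by rewrite -(odd_double_half x) -(odd_double_half y) eo eh2.
have finj : injective (fun x : 'I_m.+2 => (inord (tn x) : 'I_m.+2)).
  move=> x y /(congr1 (@nat_of_ord _)); rewrite !inordK ?tnlt // => e.
  by apply: val_inj; apply: (tninj _ _ (ltn_ord x) (ltn_ord y) e).
have tnev (i : 'I_K) : tn (i.*2) = ((sg i).*2 + odd j)%N.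
  rewrite /tn odd_double doubleK /=; congr (_.*2 + _)%N.
  by rewrite inord_val.
have tnod (i : 'I_K) : tn (i.*2).+1 = ((sg i).*2 + ~~ odd j)%N.
  rewrite /tn /= odd_double /= uphalf_double; congr (_.*2 + _)%N.
  by rewrite inord_val.
have eI : iota 0 m.+2 = iota 0 K.*2 by rewrite eK.
exists (perm finj); split.
  apply: val_inj; rewrite permE /= inordK ?tnlt //.
  rewrite /tn /= (_ : inord 0 = ord0 :> 'I_K); last by apply: val_inj; rewrite /= inordK.
  rewrite tpermL inordK // addnC; exact: odd_double_half.
move=> g; rewrite !enum_iota eI.
have -> : [seq g (perm finj (inord i)) | i <- iota 0 K.*2] =
          [seq g (inord (tn i)) | i <- iota 0 K.*2].
  apply/eq_in_map => i; rewrite mem_iota add0n -eK => hi.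
  by rewrite permE; congr (g (inord (tn _))); rewrite inordK.
rewrite !(pp_iota (fun i => g (inord _))).
pose F (i : 'I_K) := A (g (inord (i.*2))) (g (inord (i.*2).+1)).
transitivity (\prod_(i < K) F (sg i)).
  apply: eq_bigr => i _; rewrite !add0n tnev tnod /F.
  by case: (odd j); rewrite ?addn0 ?addn1 // Asym.
transitivity (\prod_(i < K) F i); last by apply: eq_bigr => i _; rewrite /F add0n.
by rewrite [RHS](reindex_perm sg).
Qed.

Lemma PSn_wick m f : ~~ odd m ->
  PSn m.+2 f = m.+2%:R * \sum_(b < m.+1)
      A (f 0%N) (f b.+1) * PSn m (fun i => f (bump b i).+1).
Proof.
move=> em; rewrite /PSn (sum_partition_inv _ ord0).
have H : forall j : 'I_m.+2,
  \sum_(p : 'S_m.+2 | p j == ord0) prod_pairs A [seq f (p x : nat) | x <- enum 'I_m.+2]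
  = \sum_(p : 'S_m.+2 | p ord0 == ord0) prod_pairs A [seq f (p x : nat) | x <- enum 'I_m.+2].
  move=> j; have [tau [t0 tinv]] := tau_exists j em.
  rewrite [RHS](reindex_inj (mulgI tau)) /=.
  apply: eq_big => p; first by rewrite permM t0.
  move=> _; rewrite -(tinv (fun x => f (p x))); congr prod_pairs.
  by apply: eq_map => x; rewrite permM.
rewrite (eq_bigr _ (fun j _ => H j)) sumr_const card_ord mulr_natl; congr (_ *+ _).
rewrite sum_lift_perm (sum_partition0 (fun q => prod_pairs A _)).
apply: eq_bigr => b _; rewrite sum_lift_perm mulr_sumr.
apply: eq_bigr => r _.
rewrite enum_ordSl /= lift_perm_id enum_ordSl /= lift_perm_lift lift_perm_id.
rewrite -!map_comp; congr (_ * prod_pairs A _).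
by apply: eq_map => x /=; rewrite !lift_perm_lift.
Qed.

Definition W (s : seq 'I_d.+1) : R :=
  (size s)`!%:R^-1 * PSn (size s) (nth ord0 s).

Lemma stpow_W n (u : n.-tuple 'I_d.+1) : mx_stpow A n u = W u.
Proof.
rewrite /mx_stpow /Sym /W size_tuple; congr (_ * _).
apply: eq_bigr => p _; rewrite /mx_tpow /=; congr prod_pairs.
rewrite /ord_tuple /=; apply: eq_map => j; exact: tnth_nth.
Qed.

Definition rem_at (b : nat) (s : seq 'I_d.+1) := take b s ++ drop b.+1 s.

Lemma size_rem_at b s : (b < size s)%N -> size (rem_at b s) = (size s).-1.
Proof.
move=> hb; rewrite /rem_at size_cat size_take size_drop hb; lia.
Qed.

Lemma nth_rem_at b s i : (b < size s)%N ->
  nth ord0 (rem_at b s) i = nth ord0 s (bump b i).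
Proof.
move=> hb; rewrite /rem_at nth_cat size_take hb /bump.
case: ltnP => hi.
  by rewrite nth_take // leqNgt hi.
rewrite nth_drop add1n; congr nth; lia.
Qed.

Lemma W_perm s s' : perm_eq s s' -> W s = W s'.
Proof.
move=> P; have e := perm_size P.
have /tuple_permP [sg Hs] : perm_eq s (in_tuple s') by [].
have Hn : forall i : 'I_(size s'), nth ord0 s i = nth ord0 s' (sg i).
  move=> i; rewrite Hs -tnth_nth tnth_mktuple (tnth_nth ord0) //.
rewrite /W e /PSn; congr (_ * _).
rewrite [RHS](reindex_inj (mulIg sg)) /=.
apply: eq_bigr => p _; congr prod_pairs; apply: eq_map => j.
by rewrite Hn permM.
Qed.

Lemma W_wick x s : odd (size s) ->
  (size s)%:R * W (x :: s) =
  \sum_(b < size s) A x (nth ord0 s b) * W (rem_at b s).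
Proof.
case E: (size s) => [|m] //= om.
have em : ~~ odd m by rewrite om.
rewrite /W /= E PSn_wick // !mulr_sumr; apply: eq_bigr => b _ /=.
rewrite size_rem_at E //= (PSn_ext (g := fun i => nth ord0 s (bump b i))); last first.
  by move=> i _; rewrite nth_rem_at ?E.
rewrite !factS !natrM.
have h1 : (m.+1%:R : R) != 0 by rewrite pnatr_eq0.
have h2 : (m.+2%:R : R) != 0 by rewrite pnatr_eq0.
have h3 : (m`!%:R : R) != 0 by rewrite pnatr_eq0 -lt0n fact_gt0.
have h1p : (1 + m%:R : R) != 0 by rewrite addrC natr1 pnatr_eq0.
have h2p : (2 + m%:R : R) != 0 by apply: lt0r_neq0; have := ler0n R m; lra.
by field; rewrite h3 h1p h2p.
Qed.


Fixpoint Cm (m : nat) (Phi : seq 'I_d.+1 -> R) (s : seq 'I_d.+1) : R :=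
  match m with
  | 0 => Phi s
  | m'.+1 => \sum_(u : 'I_d.+1) Cm m' Phi (u :: u :: s)
  end.

Lemma C_perm Phi : (forall s s', perm_eq s s' -> Phi s = Phi s') ->
  forall m s s', perm_eq s s' -> Cm m Phi s = Cm m Phi s'.
Proof.
move=> HP; elim=> [|m IH] s s' P /=; first exact: HP.
by apply: eq_bigr => u _; apply: IH; rewrite !perm_cons.
Qed.

Lemma CW_perm m s s' : perm_eq s s' -> Cm m W s = Cm m W s'.
Proof. exact: (C_perm W_perm). Qed.

Lemma Qrec m x s : odd (size s) ->
  (m.*2 + size s)%:R * Cm m W (x :: s) =
  \sum_(0 <= b < size s) A x (nth ord0 s b) * Cm m W (rem_at b s)
  + m.*2%:R * \sum_(v : 'I_d.+1) A x v * Cm m.-1 W (v :: s).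
Proof.
elim: m s => [|m IH] s os.
  by rewrite /= mul0r addr0 add0n W_wick // big_mkord.
have e2 : forall u,
  (m.*2 + (size s).+2)%:R * Cm m W (x :: u :: u :: s) =
  2%:R * (A x u * Cm m W (u :: s))
  + \sum_(0 <= b < size s) A x (nth ord0 s b) * Cm m W (u :: u :: rem_at b s)
  + m.*2%:R * \sum_(v : 'I_d.+1) A x v * Cm m.-1 W (v :: u :: u :: s).
  move=> u; rewrite (IH (u :: u :: s)); last by rewrite /= negbK.
  rewrite big_ltn // big_ltn // !big_add1 /= /rem_at /= drop0; ring.
have e1 : (m.+1.*2 + size s)%:R * Cm m.+1 W (x :: s) =
    \sum_(u : 'I_d.+1) (m.*2 + (size s).+2)%:R * Cm m W (x :: u :: u :: s).
  rewrite /= mulr_sumr; apply: eq_bigr => u _.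
  rewrite doubleS addSn addSn -addnS -addnS; congr (_ * _).
  apply: CW_perm.
  by rewrite (perm_catCA [:: u; u] [:: x] s).
rewrite e1 (eq_bigr _ (fun u _ => e2 u)) !big_split /=.
have h0 : \sum_(u : 'I_d.+1) 2%:R * (A x u * Cm m W (u :: s)) =
          2%:R * \sum_(v : 'I_d.+1) A x v * Cm m W (v :: s).
  by rewrite mulr_sumr.
have h1 : \sum_(u : 'I_d.+1) \sum_(0 <= b < size s)
              A x (nth ord0 s b) * Cm m W (u :: u :: rem_at b s) =
          \sum_(0 <= b < size s) A x (nth ord0 s b) * Cm m.+1 W (rem_at b s).
  rewrite exchange_big; apply: eq_bigr => b _; by rewrite /= mulr_sumr.
have h2 : \sum_(u : 'I_d.+1) m.*2%:R * \sum_(v : 'I_d.+1) A x v * Cm m.-1 W (v :: u :: u :: s)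
          = m.*2%:R * \sum_(v : 'I_d.+1) A x v * Cm m W (v :: s).
  clear h0 h1; case: m {IH e1 e2} => [|m].
    by rewrite mul0r big1 // => u _; rewrite mul0r.
  rewrite -mulr_sumr; congr (_ * _); rewrite exchange_big; apply: eq_bigr => v _.
  rewrite -mulr_sumr /=; congr (_ * _); apply: eq_bigr => u _; apply: CW_perm.
  by rewrite (perm_catCA [:: v] [:: u; u] s).
rewrite h0 h1 h2 doubleS -addn2 natrD /=; ring.
Qed.

End Helpers.

Lemma dfact_gt0 n : (0 < dfact n)%N.
Proof.
have : (0 < dfact n)%N /\ (0 < dfact n.+1)%N.
  elim: n => [|n [h1 h2]] //; split => //=; rewrite muln_gt0 h1; done.
by case.
Qed.

Section Coef.
Variable R : realFieldType.

Lemma dfactSS n : dfact n.+2 = (n.+2 * dfact n)%N.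
Proof. by []. Qed.

Lemma dcoef1 m : dcoef R m.+2 1 = (m.+1.*2.+1)%:R^-1.
Proof.
rewrite /dcoef.
have e1 : (2 * m.+2).-1 = (m.*2.+1).+2 by rewrite -mul2n; lia.
have e2 : (2 * (m.+2 - 1)).-1 = m.*2.+1 by rewrite -mul2n; lia.
have e3 : (m.+2 - 1 = m.+1)%N by lia.
rewrite e1 e2 e3.
rewrite (_ : (dfact m.*2.+3 * (m.+1)`!)%N = (m.*2.+3 * (2 ^ 0 * dfact m.*2.+1 * (m.+1)`!))%N); last first.
  by rewrite dfactSS expn0 mul1n !mulnA.
have hN : ((2 ^ 0 * dfact m.*2.+1 * (m.+1)`!)%N%:R : R) != 0.
  by rewrite pnatr_eq0 -lt0n !muln_gt0 dfact_gt0 fact_gt0.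
by rewrite [X in _ / X]natrM invfM mulrCA mulfV // mulr1 doubleS.
Qed.

Lemma dcoefS m s : (1 <= s)%N -> (s <= m.+1)%N ->
  dcoef R m.+2 s.+1 = (m.+1.*2.+1)%:R^-1 * m.+1.*2%:R * dcoef R m.+1 s.
Proof.
case: s => [|s] // _ hs; rewrite /dcoef.
have e1 : (2 * m.+2).-1 = (m.*2.+1).+2 by rewrite -mul2n; lia.
have e2 : (2 * m.+1).-1 = m.*2.+1 by rewrite -mul2n; lia.
have e3 : (m.+2 - 1 = m.+1)%N by lia.
have e4 : (m.+1 - 1 = m)%N by lia.
have e5 : (s.+2 - 1 = s.+1)%N by lia.
have e6 : (s.+1 - 1 = s)%N by lia.
rewrite e1 e2 e3 e4 e5 e6 !subSS dfactSS expnS factS.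
set X := dfact _; set Y := (m - s)`!.
have hX : (X%:R : R) != 0 by rewrite pnatr_eq0 -lt0n dfact_gt0.
have hY : (Y%:R : R) != 0 by rewrite pnatr_eq0 -lt0n fact_gt0.
have hD : ((dfact m.*2.+1)%:R : R) != 0 by rewrite pnatr_eq0 -lt0n dfact_gt0.
have hF : (m`!%:R : R) != 0 by rewrite pnatr_eq0 -lt0n fact_gt0.
have E1 : (m.+1.*2.+1%:R : R) = m.*2.+3%:R by rewrite doubleS.
have E2 : (m.+1.*2%:R : R) = 2 * m.+1%:R by rewrite -muln2 natrM mulrC.
have h3 : (m.*2.+3%:R : R) != 0 by rewrite pnatr_eq0.
rewrite !natrM E1 E2.
move: hX hY hD hF h3; move: (X%:R) (Y%:R) ((dfact m.*2.+1)%:R) (m`!%:R) (m.*2.+3%:R).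
move=> x y dd f t hx hy hd hf ht.
by field; rewrite hy hd ht.
Qed.

End Coef.

Section Main.
Variable R : realFieldType.
Variable d : nat.

Lemma tuple_cons_sum (T : finType) n (F : n.+1.-tuple T -> R) :
  \sum_(t : n.+1.-tuple T) F t = \sum_(a : T) \sum_(t : n.-tuple T) F [tuple of a :: t].
Proof.
rewrite pair_big /=.
rewrite (reindex (fun p : T * n.-tuple T => [tuple of p.1 :: p.2])) //=.
exists (fun t => (thead t, [tuple of behead t])) => [[a t] _ | t _].
  by congr pair; apply: val_inj.
by rewrite [in RHS](tuple_eta t); apply: val_inj.
Qed.

Lemma tuple_link (Phi : seq 'I_d.+1 -> R)
  (HP : forall s s', perm_eq s s' -> Phi s = Phi s') m :
  forall n t, n = m.*2 ->
  \sum_(x : n.-tuple 'I_d.+1) Phi (x ++ t) * prod_pairs (1%:M : 'M[R]_d.+1) x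
  = Cm m Phi t.
Proof.
elim: m => [|m IH] n t ->.
  rewrite /= (eq_bigr (fun _ => Phi t)); last by move=> x _; rewrite tuple0 mulr1.
  by rewrite sumr_const card_tuple expn0.
rewrite doubleS tuple_cons_sum /=; apply: eq_bigr => a _.
rewrite tuple_cons_sum (bigD1 a) //= [X in _ + X]big1 ?addr0; last first.
  move=> b nab; apply: big1 => x _.
  by rewrite mxE eq_sym (negbTE nab) mulr0n mul0r mulr0.
rewrite -(IH _ (a :: a :: t) erefl); apply: eq_bigr => x _.
rewrite mxE eqxx mulr1n mul1r; congr (_ * _); apply: HP.
by rewrite (perm_catCA [:: a; a] x t).
Qed.

Variable A : 'M[R]_d.+1.
Hypothesis hsym : A^T = A.

Definition Mm m : 'M[R]_d.+1 := \matrix_(i, j) Cm m (W A) [:: i; j].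
Definition cc m := Cm m (W A) [::].

Lemma W_nil : W A [::] = 1.
Proof.
rewrite /W /PSn /= (eq_bigr (fun _ => 1)); last by move=> p _; rewrite enum_ord0.
by rewrite sumr_const card_Sn /= mulr1 invr1.
Qed.

Lemma M_rec m : (m.*2.+1)%:R *: Mm m = cc m *: A + m.*2%:R *: (A *m Mm m.-1).
Proof.
apply/matrixP => i j; rewrite !mxE.
have := Qrec hsym m i (s:=[:: j]) isT; rewrite /= big_nat1 /= addn1 => ->.
congr (_ + _); first by rewrite mulrC.
congr (_ * _); apply: eq_bigr => v _; by rewrite mxE.
Qed.

Lemma M_formula m :
  Mm m = \sum_(1 <= s < m.+2) (dcoef R m.+1 s * cc (m.+1 - s)) *: A ^+ s.
Proof.
elim: m => [|m IH].
  have := M_rec 0; rewrite (_ : 0.*2 = 0)%N // scale0r addr0 scale1r => ->.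
  rewrite big_nat1 /cc /= W_nil expr1 mulr1.
  by rewrite /dcoef /= divr1.
have hne : ((m.+1.*2.+1)%:R : R) != 0 by rewrite pnatr_eq0.
have -> : Mm m.+1 = (m.+1.*2.+1)%:R^-1 *: ((m.+1.*2.+1)%:R *: Mm m.+1).
  by rewrite scalerA mulVf // scale1r.
rewrite M_rec /= IH big_nat_recl // dcoef1 subn1 /= scalerDr scalerA expr1.
congr (_ + _).
rewrite mulmx_sumr !scaler_sumr; apply: eq_big_nat => s /andP [h1 h2].
by rewrite dcoefS // subSS exprS -mulmxE !scalemxAr !scalerA !mulrA.
Qed.

End Main.

Unset Implicit Arguments.

Theorem lemma29 (R : realFieldType) (d : nat) (A : 'M[R]_d) (k : nat)
    (hsym : A^T = A) (htr : \tr A = 0) (hk : (1 <= k)%N) :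
  mx_of2 (contract (mx_stpow A ((k - 1).*2 + 2)) (mx_tpow 1%:M ((k - 1).*2)))
  = \sum_(1 <= s < k.+1)
      (dcoef R k s *
       scal_of0 (contract (mx_stpow A ((k - s).*2 + 0))
                          (mx_tpow 1%:M ((k - s).*2)))) *: A ^+ s.
Proof.
case: d A hsym htr => [|d] A hsym htr.
  by apply/matrixP => i; case: i.
case: k hk => [//|k] _.
have -> : (k.+1 - 1 = k)%N by rewrite subn1.
have -> : mx_of2 (contract (mx_stpow A (k.*2 + 2)) (mx_tpow 1%:M k.*2)) = Mm A k.
  apply/matrixP => i j; rewrite /mx_of2 !mxE /contract.
  rewrite -(@tuple_link _ _ _ (@W_perm _ _ A) k k.*2 [:: i; j] erefl).
  by apply: eq_bigr => x _; rewrite stpow_W.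
rewrite (M_formula hsym); apply: eq_bigr => s _; congr ((_ * _) *: _).
rewrite /scal_of0 /contract /cc -(@tuple_link _ _ _ (@W_perm _ _ A) (k.+1 - s) _ [::] erefl).
by apply: eq_bigr => x _; rewrite stpow_W.
Qed.
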